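(* Let $\{M_p\mid p\in P\}$ be a Morse decomposition of a multivector field on a finite simplicial complex $K$, and let $\sigma_1,\dots,\sigma_n$ and $\sigma'_1,\dots,\sigma'_n$ be two Morse fixed admissible enumerations of $K$, with filtered boundary matrices $A$ and $A'$. Let $S$ and $S'$ be the connection matrices output by ConMat on $A$ and $A'$ respectively. Then $S[i,j]=S'[i',j']$ whenever $i,j$ index rows/columns of $S$ and $\sigma'_{i'}=\sigma_i$, $\sigma'_{j'}=\sigma_j$ (in which case $i',j'$ index rows/columns of $S'$).
   Context: $K$ is a finite simplicial complex ($\tau\le\sigma$: $\tau$ is a face of $\sigma$; $\mathrm{cl}(\sigma)=\{\tau:\tau\le\sigma\}$). A multivector field $\mathcal V$ on $K$ is a partition of $K$ into convex sets $V$ (if $\sigma,\tau\in V$ and $\sigma\le\mu\le\tau$ then $\mu\in V$); $[\sigma]_{\mathcal V}$ is the part containing $\sigma$, $F_{\mathcal V}(\sigma)=[\sigma]_{\mathcal V}\cup\mathrm{cl}(\sigma)$, and a path is a sequence $\sigma_1,\dots,\sigma_r$ with $\sigma_k\in F_{\mathcal V}(\sigma_{k-1})$. A Morse decomposition indexed by a finite poset $(P,\le_P)$ is a partition $K=\bigsqcup_{p\in P}M_p$ such that every path from $M_p$ to $M_q$ has $q\le_P p$; $[\sigma]_P$ is the $p$ with $\sigma\in M_p$. An admissible enumeration is $\sigma_1,\dots,\sigma_n$ of all simplices of $K$ such that (a) for some linear extension $\le_{lin}$ of $\le_P$, $i\le j\Rightarrow[\sigma_i]_P\le_{lin}[\sigma_j]_P$;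 (b) if $\sigma_i$ is a proper face of $\sigma_j$ then $i<j$. Two admissible enumerations are Morse fixed if for every $p$ they induce the same order on $M_p$. The filtered boundary matrix is the $n\times n$ $\mathbb Z_2$-matrix with entry $(i,j)$ equal to $1$ iff $\sigma_i$ is a codimension-one face of $\sigma_j$; row/column $i$ represents $\sigma_i$. For a nonzero column $j$ of a matrix $B$, $\mathrm{low}_B(j)$ is the largest $i$ with $B[i,j]=1$. Column (and row) $j$ is homogeneous if nonzero and $\sigma_j$, $\sigma_{\mathrm{low}_B(j)}$ are in the same Morse set; then index $\mathrm{low}_B(j)$ is targetable. $J_h(B)$, $J_t(B)$: sets of homogeneous, targetable indices. Algorithm ConMat on $A$ (in place): for $j=1,\dots,n$: for $i=\mathrm{low}_A(j)$ down to $1$: if $A[i,j]=1$ and some column $s<j$ of the current matrix is homogeneous with $\mathrm{low}_A(s)=i$, add column $s$ to column $j$ (mod 2). With $A_{out}$ the result, let $J=\{1,\dots,n\}\setminus J_h(A_{out})\setminus J_t(A_{out})$; the output $S$ is the submatrix of $A_{out}$ on rows and columns in $J$. *)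

(* Defs.v *)
From HB Require Import structures.
From mathcomp Require Import all_boot all_order all_algebra.
Set Implicit Arguments. Unset Strict Implicit. Unset Printing Implicit Defensive.
Import Order.TTheory GRing.Theory.

Section Defs.
Variable V : finType.

Definition simplicial_complex (K : {set {set V}}) : Prop :=
  set0 \notin K /\
  forall s t : {set V}, s \in K -> t \subset s -> t != set0 -> t \in K.

Definition cl (K : {set {set V}}) (s : {set V}) : {set {set V}} :=
  [set t in K | t \subset s].

Definition convex (X : {set {set V}}) : Prop :=
  forall s t mu : {set V}, s \in X -> t \in X -> s \subset mu -> mu \subset t ->
    mu \in X.

Definition multivector_field (K : {set {set V}}) (MV : {set {set {set V}}}) : Prop :=
  partition MV K /\ forall X, X \in MV -> convex X.

Definition Fmv (K : {set {set V}}) (MV : {set {set {set V}}}) (s : {set V}) :=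
  pblock MV s :|: cl K s.

Definition mv_path (K : {set {set V}}) (MV : {set {set {set V}}})
  (x0 : {set V}) (p : seq {set V}) : bool :=
  path (fun a b => b \in Fmv K MV a) x0 p.

(* Morse decomposition indexed by the finite poset P: the map m assigns to
   each simplex of K the index of its Morse set, M_p = [set s in K | m s == p]. *)
Definition morse_decomposition (d : Order.disp_t) (P : finPOrderType d)
  (K : {set {set V}}) (MV : {set {set {set V}}}) (m : {set V} -> P) : Prop :=
  forall (x0 : {set V}) (p : seq {set V}),
    x0 \in K -> mv_path K MV x0 p -> (m (last x0 p) <= m x0)%O.

(* An enumeration sigma_1..sigma_n (0-based here) of all simplices of K. *)
Definition enumeration (K : {set {set V}}) (n : nat) (sig : 'I_n -> {set V}) : Prop :=
  injective sig /\ [set sig i | i : 'I_n] = K.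

Definition linear_extension (d : Order.disp_t) (P : finPOrderType d) (lin : rel P) : Prop :=
  reflexive lin /\ antisymmetric lin /\ transitive lin /\ total lin /\
  forall p q : P, (p <= q)%O -> lin p q.

Definition admissible (d : Order.disp_t) (P : finPOrderType d) (m : {set V} -> P)
  (n : nat) (sig : 'I_n -> {set V}) : Prop :=
  (exists lin : rel P, linear_extension lin /\
     forall i j : 'I_n, (i <= j)%N -> lin (m (sig i)) (m (sig j))) /\
  (forall i j : 'I_n, sig i \proper sig j -> (i < j)%N).

(* Same order induced on each Morse set. *)
Definition morse_fixed (d : Order.disp_t) (P : finPOrderType d) (m : {set V} -> P)
  (n : nat) (sig sig' : 'I_n -> {set V}) : Prop :=
  forall i j i' j' : 'I_n, sig' i' = sig i -> sig' j' = sig j ->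
    m (sig i) = m (sig j) -> (i < j)%N = (i' < j')%N.

Definition bdmx (n : nat) (sig : 'I_n -> {set V}) : 'M['F_2]_n :=
  \matrix_(i, j) (if (sig i \subset sig j) && (#|sig j| == #|sig i|.+1)
                  then 1%R else 0%R).

Definition low (n : nat) (B : 'M['F_2]_n) (j : 'I_n) : option 'I_n :=
  [pick i | (B i j != 0%R) && [forall k : 'I_n, (B k j != 0%R) ==> (k <= i)%N]].

Definition homogeneous (d : Order.disp_t) (P : finPOrderType d) (m : {set V} -> P)
  (n : nat) (sig : 'I_n -> {set V}) (B : 'M['F_2]_n) (j : 'I_n) : bool :=
  if low B j is Some i then m (sig i) == m (sig j) else false.

Definition targetable (d : Order.disp_t) (P : finPOrderType d) (m : {set V} -> P)
  (n : nat) (sig : 'I_n -> {set V}) (B : 'M['F_2]_n) (k : 'I_n) : bool :=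
  [exists j : 'I_n, homogeneous m sig B j && (low B j == Some k)].

Definition addcol (n : nat) (B : 'M['F_2]_n) (s j : 'I_n) : 'M['F_2]_n :=
  \matrix_(a, b) (if b == j then (B a j + B a s)%R else B a b).

Definition conmat_step (d : Order.disp_t) (P : finPOrderType d) (m : {set V} -> P)
  (n : nat) (sig : 'I_n -> {set V}) (j : 'I_n) (B : 'M['F_2]_n) (i : 'I_n) :
  'M['F_2]_n :=
  if B i j != 0%R then
    match [pick s : 'I_n | [&& (s < j)%N, homogeneous m sig B s & low B s == Some i]] with
    | Some s => addcol B s j
    | None => B
    end
  else B.

Definition conmat_col (d : Order.disp_t) (P : finPOrderType d) (m : {set V} -> P)
  (n : nat) (sig : 'I_n -> {set V}) (B : 'M['F_2]_n) (j : 'I_n) : 'M['F_2]_n :=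
  match low B j with
  | None => B
  | Some l => foldl (conmat_step m sig j) B [seq i <- rev (enum (ordinal n)) | (nat_of_ord i <= nat_of_ord l)%N]
  end.

Definition ConMatOut (d : Order.disp_t) (P : finPOrderType d) (m : {set V} -> P)
  (n : nat) (sig : 'I_n -> {set V}) (A : 'M['F_2]_n) : 'M['F_2]_n :=
  foldl (conmat_col m sig) A (enum 'I_n).

Definition ConMatJ (d : Order.disp_t) (P : finPOrderType d) (m : {set V} -> P)
  (n : nat) (sig : 'I_n -> {set V}) (A : 'M['F_2]_n) : {set 'I_n} :=
  let B := ConMatOut m sig A in
  [set k : 'I_n | ~~ homogeneous m sig B k && ~~ targetable m sig B k].

Definition ConMatS (d : Order.disp_t) (P : finPOrderType d) (m : {set V} -> P)
  (n : nat) (sig : 'I_n -> {set V}) (A : 'M['F_2]_n) :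
  'M['F_2]_#|ConMatJ m sig A| :=
  \matrix_(a, b) ConMatOut m sig A (enum_val a) (enum_val b).

End Defs.

(* Main.v *)
Require Import Defs.
From HB Require Import structures.
From mathcomp Require Import all_boot all_order all_algebra.
Set Implicit Arguments. Unset Strict Implicit. Unset Printing Implicit Defensive.
Import Order.TTheory GRing.Theory.
Local Open Scope ring_scope.

Lemma F2nz (x : 'F_2) : x != 0 -> x = 1.
Proof. by case: x => [[|[|]]] //= ? ?; apply/val_inj. Qed.
Lemma F211 : (1 + 1 : 'F_2) = 0. Proof. by apply/val_inj. Qed.

Section Low.
Variable n : nat.
Implicit Types (B : 'M['F_2]_n).

Lemma low_ext B B' j j' : (forall a, B a j = B' a j') -> low B j = low B' j'.
Proof.
move=> H; rewrite /low; apply: eq_pick => i /=; rewrite H; congr andb.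
by apply: eq_forallb => k; rewrite H.
Qed.

Lemma lowS B j i : low B j = Some i ->
  B i j != 0 /\ forall k, B k j != 0 -> (k <= i)%N.
Proof.
rewrite /low; case: pickP => // i0 /andP[nz /forallP H] [<-].
by split=> // k nk; have := H k; rewrite nk.
Qed.

Lemma lowN B j : low B j = None -> forall k, B k j = 0.
Proof.
rewrite /low; case: pickP => // H _ k; apply/eqP; apply/negPn/negP => nk.
case: (@arg_maxnP _ k (fun i => B i j != 0) (fun i : 'I_n => val i) nk) => i0 Hi0 Hmax.
have := H i0; rewrite Hi0 /=; move/negP; apply; apply/forallP => k'.
by apply/implyP => /Hmax.
Qed.

Lemma lowE B j i : B i j != 0 -> (forall k, B k j != 0 -> (k <= i)%N) ->
  low B j = Some i.
Proof.
move=> nz H; case E: (low B j) => [i'|].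
  have [nz' H'] := lowS E; congr Some; apply/val_inj/eqP.
  by rewrite eqn_leq H // H'.
by move: nz; rewrite (lowN E) eqxx.
Qed.
End Low.
Section Col.
Variables (V : finType) (d : Order.disp_t) (P : finPOrderType d) (m : {set V} -> P)
  (n : nat) (sig : 'I_n -> {set V}).
Implicit Types (B : 'M['F_2]_n).

Definition Hs B (j s : 'I_n) :=
  [&& (s < j)%N, homogeneous m sig B s & (m (sig s) <= m (sig j))%O].

Definition Inv B j B' (R : pred 'I_n) :=
 [/\ forall a b, b != j -> B' a b = B a b,
     exists2 x : 'I_n -> 'F_2, (forall s, x s != 0 -> Hs B j s) &
        forall a, B' a j = B a j + \sum_s x s * B a s
   & forall s i : 'I_n, (s < j)%N -> homogeneous m sig B s -> low B s = Some i -> R i ->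
        B' i j = 0].

Lemma sum_nz (F : 'I_n -> 'F_2) : \sum_s F s != 0 -> exists s, F s != 0.
Proof.
move=> H; case: (boolP [exists s, F s != 0]) => [/existsP //|/existsPn H2].
move: H.
by rewrite big1 ?eqxx // => s _; apply/eqP; have := H2 s; rewrite negbK.
Qed.

Lemma homog_ext B B' j : (forall a, B a j = B' a j) ->
  homogeneous m sig B j = homogeneous m sig B' j.
Proof. by move=> H; rewrite /homogeneous (low_ext H). Qed.

Lemma lc_bound B (j : 'I_n) B' (x : 'I_n -> 'F_2) :
  (forall (s a : 'I_n), (s <= j)%N -> B a s != 0 -> (m (sig a) <= m (sig s))%O) ->
  (forall s, x s != 0 -> Hs B j s) ->
  (forall a, B' a j = B a j + \sum_s x s * B a s) ->
  forall a, B' a j != 0 -> (m (sig a) <= m (sig j))%O.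
Proof.
move=> hb hx e a; rewrite e.
case Ha: (B a j == 0); last by move=> _; apply: hb => //; rewrite Ha.
rewrite (eqP Ha) add0r => /sum_nz [s].
case Hxs: (x s == 0); first by rewrite (eqP Hxs) mul0r eqxx.
rewrite mulf_eq0 Hxs /= => nz.
have /and3P[lt _ le] := hx s (negbT Hxs).
by apply: le_trans le; apply: hb nz; apply: ltnW.
Qed.

Lemma Inv_sub B (j : 'I_n) B' (R R' : pred 'I_n) : (forall i, R' i -> R i) ->
  Inv B j B' R -> Inv B j B' R'.
Proof. move=> hs [h1 h2 h3]; split; [exact: h1 | exact: h2 | move=> s0 i a b c /hs; exact: (h3 s0 i a b c)]. Qed.

Lemma Inv_step B (j : 'I_n) B' (R : pred 'I_n) (x0 : 'I_n) :
  (forall (s a : 'I_n), (s <= j)%N -> B a s != 0 -> (m (sig a) <= m (sig s))%O) ->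
  Inv B j B' R -> (forall r : 'I_n, R r -> (x0 < r)%N) ->
  Inv B j (conmat_step m sig j B' x0) (fun r => R r || (r == x0)).
Proof.
move=> hb [h1 [x hx ex] h3] hR.
have hls s : s != j -> low B' s = low B s.
  by move=> ns; apply: low_ext => a; rewrite h1.
have hhs s : s != j -> homogeneous m sig B' s = homogeneous m sig B s.
  by move=> ns; apply: homog_ext => a; rewrite h1.
rewrite /conmat_step; case: ifP => nz; last first.
  split; [done | by exists x | move=> s i lt hh hl /orP[/(h3 s i lt hh hl) //|/eqP ->]].
  by apply/eqP; rewrite -(negbK (_ == _)) nz.
case: pickP => [s0 /and3P[lt0 hh0 /eqP hl0]|hnone].
  have ns0 : s0 != j by rewrite neq_ltn lt0.
  rewrite hhs // in hh0; rewrite hls // in hl0.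
  have [nzl0 lel0] := lowS hl0.
  split.
  - by move=> a b nb; rewrite /addcol mxE (negbTE nb) h1.
  - exists (fun s => if s == s0 then x s + 1 else x s).
      move=> s /=; have [->|ns] := eqVneq s s0; last by move/hx.
      rewrite /Hs lt0 hh0 /=; have [_ lel] := lowS hl0.
      have := lc_bound hb hx ex nz.
      by move: hh0; rewrite /homogeneous hl0 => /eqP <-.
    move=> a; rewrite /addcol mxE eqxx ex (h1 a s0 ns0) -addrA; congr (_ + _).
    rewrite (bigD1 s0) //= [in RHS](bigD1 s0) //= eqxx mulrDl mul1r.
    rewrite -!addrA; congr (_ + _); rewrite addrC; congr (_ + _).
    by apply: eq_bigr => s /negbTE ->.
  - move=> s i lt hh hl; rewrite /addcol mxE eqxx (h1 i s0 ns0).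
    case/orP => [Ri|/eqP ->].
      rewrite (h3 s i lt hh hl Ri) add0r; apply/eqP/negPn/negP => /lel0.
      by rewrite leqNgt hR.
    by rewrite (F2nz nz) (F2nz nzl0) F211.
split; [done | by exists x | move=> s i lt hh hl /orP[/(h3 s i lt hh hl) //|/eqP Ei]].
have ns : s != j by rewrite neq_ltn lt.
have := hnone s; rewrite lt hhs // hh hls // hl Ei eqxx.
by [].
Qed.
End Col.
Section Col2.
Variables (V : finType) (d : Order.disp_t) (P : finPOrderType d) (m : {set V} -> P)
  (n : nat) (sig : 'I_n -> {set V}).
Implicit Types (B : 'M['F_2]_n).

Lemma Inv_fold B (j : 'I_n) :
  (forall (s a : 'I_n), (s <= j)%N -> B a s != 0 -> (m (sig a) <= m (sig s))%O) ->
  forall s : seq 'I_n, sorted (fun a b : 'I_n => (a < b)%N) s ->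
  forall B' (R : pred 'I_n), Inv m sig B j B' R ->
  (forall x r : 'I_n, x \in s -> R r -> (x < r)%N) ->
  Inv m sig B j (foldr (fun x z => conmat_step m sig j z x) B' s)
     (fun r => R r || (r \in s)).
Proof.
move=> hb; elim=> [|x s IH] hs B' R hI hR /=.
  by apply: Inv_sub hI => i; rewrite in_nil orbF.
have hs' := path_sorted hs.
have hall : all (fun b : 'I_n => (x < b)%N) s.
  by apply: (order_path_min _ hs) => a b c; apply: ltn_trans.
have hI2 : Inv m sig B j (foldr (fun x z => conmat_step m sig j z x) B' s)
     (fun r => R r || (r \in s)).
  by apply: IH => // x0 r hx; apply: hR; rewrite in_cons hx orbT.
have := Inv_step hb hI2 (x0 := x).
have hlt : forall r : 'I_n, R r || (r \in s) -> (x < r)%N.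
  move=> r /orP[/(hR x r (mem_head _ _)) //|hr].
  by move/allP: hall => /(_ r hr).
move/(_ hlt); apply: Inv_sub => i; rewrite in_cons.
by case: (R i); case: (i == x); case: (i \in s).
Qed.

Lemma Inv_col B (j : 'I_n) :
  (forall (s a : 'I_n), (s <= j)%N -> B a s != 0 -> (m (sig a) <= m (sig s))%O) ->
  Inv m sig B j (conmat_col m sig B j) predT.
Proof.
move=> hb; rewrite /conmat_col; case E: (low B j) => [l|]; last first.
  split=> //; last by move=> s i _ _ _ _; rewrite (lowN E).
  exists (fun _ => 0) => [s|a]; first by rewrite eqxx.
  by rewrite big1 ?addr0 // => s _; rewrite mul0r.
have [nzl lel] := lowS E.
rewrite filter_rev foldl_rev.
have hI0 : Inv m sig B j B (fun r : 'I_n => (l < r)%N).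
  split=> //.
    exists (fun _ => 0) => [s|a]; first by rewrite eqxx.
    by rewrite big1 ?addr0 // => s _; rewrite mul0r.
  move=> s i _ _ _ li; apply/eqP/negPn/negP => /lel.
  by rewrite leqNgt li.
have hsort : sorted (fun a b : 'I_n => (a < b)%N) (enum 'I_n).
  by have := iota_ltn_sorted 0 n; rewrite -val_enum_ord sorted_map.
have hsort2 : sorted (fun a b : 'I_n => (a < b)%N) [seq i <- enum (ordinal n) | (nat_of_ord i <= nat_of_ord l)%N].
  by apply: sorted_filter => // a b c; apply: ltn_trans.
have := Inv_fold hb hsort2 hI0.
have hlt : forall x r : 'I_n, x \in [seq i <- enum (ordinal n) | (nat_of_ord i <= nat_of_ord l)%N] -> (l < r)%N -> (x < r)%N.
  by move=> x r; rewrite mem_filter => /andP[xl _] lr; apply: leq_ltn_trans lr.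
move/(_ hlt); apply: Inv_sub => i _; rewrite mem_filter mem_enum andbT.
by rewrite ltnNge orNb.
Qed.
End Col2.
Section Outer.
Variables (V : finType) (d : Order.disp_t) (P : finPOrderType d) (m : {set V} -> P)
  (n : nat) (sig : 'I_n -> {set V}).
Implicit Types (B : 'M['F_2]_n).

Definition Good (A : 'M['F_2]_n) B k :=
 [/\ forall a (b : 'I_n), (k <= b)%N -> B a b = A a b,
     forall j : 'I_n, (j < k)%N -> exists2 x : 'I_n -> 'F_2,
        (forall s, x s != 0 -> Hs m sig B j s) &
        forall a, B a j = A a j + \sum_s x s * B a s,
     forall (j s i : 'I_n), (j < k)%N -> (s < j)%N -> homogeneous m sig B s ->
        low B s = Some i -> B i j = 0
   & forall (j a : 'I_n), B a j != 0 -> (m (sig a) <= m (sig j))%O].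

Lemma sum_transfer B B' (j : 'I_n) (x : 'I_n -> 'F_2) a :
  (forall s, x s != 0 -> s != j) -> (forall a b, b != j -> B' a b = B a b) ->
  \sum_s x s * B a s = \sum_s x s * B' a s.
Proof.
move=> hx h1; apply: eq_bigr => s _.
case E: (x s == 0); first by rewrite (eqP E) !mul0r.
by rewrite h1 // hx // E.
Qed.

Lemma Good_step (A : 'M['F_2]_n) B k (hk : (k < n)%N) :
  Good A B k -> Good A (conmat_col m sig B (Ordinal hk)) k.+1.
Proof.
set j := Ordinal hk; move=> [g0 g1 g2 g4].
have hb : forall (s a : 'I_n), (s <= j)%N -> B a s != 0 -> (m (sig a) <= m (sig s))%O.
  by move=> s a _; apply: g4.
have [h1 [x hx ex] h3] := Inv_col hb.
set B' := conmat_col m sig B j in h1 ex h3 *.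
have nj (s : 'I_n) : (s < k)%N -> s != j.
  by move=> sk; apply/eqP => E; move: sk; rewrite E ltnn.
have hom (s : 'I_n) : (s < k)%N -> homogeneous m sig B' s = homogeneous m sig B s.
  by move=> sk; apply: homog_ext => a; rewrite h1 // nj.
have hlow (s : 'I_n) : (s < k)%N -> low B' s = low B s.
  by move=> sk; apply: low_ext => a; rewrite h1 // nj.
have eqj (j' : 'I_n) : (j' < k.+1)%N -> ~~ (j' < k)%N -> j' = j.
  by move=> a b; apply: val_inj => /=; apply/eqP; rewrite eqn_leq -ltnS a leqNgt b.
split.
- move=> a b kb; rewrite h1 ?g0 //; first exact: ltnW.
  by apply/eqP => E; move: kb; rewrite E ltnn.
- move=> j' jk; case: (boolP (j' < k)%N) => jk'.
    have [y hy ey] := g1 j' jk'.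
    have hy' : forall s, y s != 0 -> (s < k)%N.
      by move=> s /hy /and3P[a _ _]; apply: ltn_trans jk'.
    exists y.
      move=> s ys; have := hy s ys; rewrite /Hs hom ?hy' //.
    move=> a; rewrite h1 ?nj // ey; congr (_ + _); apply: sum_transfer; last exact: h1.
    by move=> s /hy'; apply: nj.
  rewrite (eqj j' jk jk'); exists x.
    move=> s xs; have := hx s xs; rewrite /Hs; case/and3P => a b c.
    by rewrite a c hom ?b.
  move=> a; rewrite ex g0 //; congr (_ + _); apply: sum_transfer; last exact: h1.
  by move=> s /hx /and3P[a' _ _]; apply: nj.
- move=> j' s i jk sj; have sk : (s < k)%N by apply: leq_trans sj _.
  rewrite hom // hlow // => hh hl.
  case: (boolP (j' < k)%N) => jk'.
    by rewrite h1 ?nj //; apply: g2 hl.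
  rewrite (eqj j' jk jk') in sj *; exact: h3 hh hl _.
- move=> j' a; case: (eqVneq j' j) => [->|nj'].
    exact: lc_bound hb hx ex a.
  by rewrite h1 //; apply: g4.
Qed.

Lemma Good_out (A : 'M['F_2]_n) :
  (forall (j a : 'I_n), A a j != 0 -> (m (sig a) <= m (sig j))%O) ->
  Good A (ConMatOut m sig A) n.
Proof.
move=> hA.
suff H : forall k, (k <= n)%N -> Good A (foldl (conmat_col m sig) A (take k (enum 'I_n))) k.
  have := H n (leqnn n); rewrite take_oversize // size_enum_ord //.
elim=> [_|k IH kn].
  rewrite take0 /=; split=> //.
have hk : (k < n)%N := kn.
rewrite (take_nth (Ordinal hk)) ?size_enum_ord // foldl_rcons.
have -> : nth (Ordinal hk) (enum 'I_n) k = Ordinal hk.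
  by apply/val_inj; rewrite /= nth_enum_ord.
by apply: Good_step; apply: IH; apply: ltnW.
Qed.
End Outer.
Section Uniq.
Variable n : nat.
Lemma uniq_comb (c : 'M['F_2]_n) (H : pred 'I_n) (z : 'I_n -> 'F_2) :
 (forall s, H s -> exists i, low c s = Some i) ->
 (forall s t i, H s -> H t -> low c s = Some i -> low c t = Some i -> s = t) ->
 (forall s, z s != 0 -> H s) ->
 (forall s i, H s -> low c s = Some i -> \sum_t z t * c i t = 0) ->
 forall s, z s = 0.
Proof.
move=> hl hinj hz hsum s0; apply/eqP/negPn/negP => nz0.
case: (@arg_maxnP _ s0 (fun s => z s != 0) (fun s => val (odflt s (low c s))) nz0).
move=> s1 nz1 hmax.
have [i1 e1] := hl s1 (hz s1 nz1).
have [c1 le1] := lowS e1.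
have := hsum s1 i1 (hz s1 nz1) e1.
rewrite (bigD1 s1) //= big1 ?addr0 => [|t nt].
  by apply/eqP; rewrite mulf_neq0.
case E: (z t == 0); first by rewrite (eqP E) mul0r.
have nzt := negbT E.
have [it et] := hl t (hz t nzt).
have := hmax t nzt; rewrite e1 et /= => itl.
case E2: (c i1 t == 0); first by rewrite (eqP E2) mulr0.
have [_ lett] := lowS et.
have li := lett i1 (negbT E2).
have ei : it = i1 by apply/val_inj/eqP; rewrite eqn_leq itl li.
rewrite ei in et; have := hinj _ _ _ (hz t nzt) (hz s1 nz1) et e1.
by move=> tE; move: nt; rewrite tE eqxx.
Qed.
End Uniq.

Section Compare.
Variables (V : finType) (d : Order.disp_t) (P : finPOrderType d) (m : {set V} -> P)
  (n : nat).

Lemma adm_lt (sig : 'I_n -> {set V}) a b : admissible m sig ->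
  (m (sig a) < m (sig b))%O -> (a < b)%N.
Proof.
case=> [[lin [[_ [an [_ [_ ext]]]] hl]] _] hlt.
rewrite ltnNge; apply/negP => ba.
have h1 := hl b a ba; have h2 := ext _ _ (ltW hlt).
have e := an _ _ (introT andP (conj h2 h1)).
by move: hlt; rewrite e ltxx.
Qed.

Lemma mf_le (sig1 sig2 : 'I_n -> {set V}) (pi : 'I_n -> 'I_n) a b :
  morse_fixed m sig1 sig2 -> (forall a, sig2 (pi a) = sig1 a) ->
  m (sig1 a) = m (sig1 b) -> (a <= b)%N = (pi a <= pi b)%N.
Proof.
move=> mf hp e.
by rewrite leqNgt [in RHS]leqNgt (mf b a (pi b) (pi a) (hp b) (hp a) (esym e)).
Qed.

Lemma mf_lt (sig1 sig2 : 'I_n -> {set V}) (pi : 'I_n -> 'I_n) a b :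
  admissible m sig1 -> admissible m sig2 ->
  morse_fixed m sig1 sig2 -> (forall a, sig2 (pi a) = sig1 a) ->
  (m (sig1 a) <= m (sig1 b))%O -> (a < b)%N = (pi a < pi b)%N.
Proof.
move=> ad1 ad2 mf hp; rewrite le_eqVlt => /orP[/eqP e|lt].
  exact: (mf a b (pi a) (pi b) (hp a) (hp b) e).
rewrite (adm_lt ad1 lt) (@adm_lt sig2) //.
by rewrite !hp.
Qed.

Lemma low_transfer (sig1 sig2 : 'I_n -> {set V}) (pi rho : 'I_n -> 'I_n)
  (C1 C2 : 'M['F_2]_n) s i :
  admissible m sig2 -> morse_fixed m sig1 sig2 ->
  (forall a, sig2 (pi a) = sig1 a) -> (forall a, pi (rho a) = a) ->
  (forall a, C2 (pi a) (pi s) = C1 a s) ->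
  (forall a, C1 a s != 0 -> (m (sig1 a) <= m (sig1 s))%O) ->
  low C1 s = Some i -> m (sig1 i) = m (sig1 s) -> low C2 (pi s) = Some (pi i).
Proof.
move=> ad2 mf hp hr hc hb hl he.
have [nz le] := lowS hl.
apply: lowE; first by rewrite hc.
move=> k; rewrite -(hr k) hc => nzk.
have := hb _ nzk; rewrite -he le_eqVlt => /orP[/eqP e|lt].
  by rewrite -(mf_le mf hp e) le.
by apply: ltnW; apply: (@adm_lt sig2) => //; rewrite !hp.
Qed.

Lemma homog_transfer (sig1 sig2 : 'I_n -> {set V}) (pi rho : 'I_n -> 'I_n)
  (C1 C2 : 'M['F_2]_n) s :
  admissible m sig2 -> morse_fixed m sig1 sig2 ->
  (forall a, sig2 (pi a) = sig1 a) -> (forall a, pi (rho a) = a) ->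
  (forall a, C2 (pi a) (pi s) = C1 a s) ->
  (forall a, C1 a s != 0 -> (m (sig1 a) <= m (sig1 s))%O) ->
  homogeneous m sig1 C1 s -> homogeneous m sig2 C2 (pi s).
Proof.
move=> ad2 mf hp hr hc hb; rewrite /homogeneous.
case E: (low C1 s) => [i|//] /eqP he.
by rewrite (low_transfer ad2 mf hp hr hc hb E he) !hp he.
Qed.
End Compare.
Section Main.
Variables (V : finType) (d : Order.disp_t) (P : finPOrderType d) (m : {set V} -> P)
  (n : nat).

Lemma bd_bound K MV (sig : 'I_n -> {set V}) :
  morse_decomposition K MV m -> enumeration K sig ->
  forall (j a : 'I_n), bdmx sig a j != 0 -> (m (sig a) <= m (sig j))%O.
Proof.
move=> md [_ eK] j a; rewrite /bdmx mxE; case: ifP => [/andP[sub _] _|_]; last by rewrite eqxx.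
have Kj : sig j \in K by rewrite -eK; apply/imsetP; exists j.
have Ka : sig a \in K by rewrite -eK; apply/imsetP; exists a.
apply: (md (sig j) [:: sig a] Kj).
by rewrite /mv_path /= andbT /Fmv in_setU /cl in_set Ka sub orbT.
Qed.

Lemma mf_sym (sig sig' : 'I_n -> {set V}) :
  morse_fixed m sig sig' -> morse_fixed m sig' sig.
Proof.
move=> mf i j i' j' e1 e2 e3.
by rewrite (mf i' j' i j (esym e1) (esym e2)) // e1 e2.
Qed.

Lemma main_cmp K MV (sig sig' : 'I_n -> {set V}) (pi rho : 'I_n -> 'I_n) :
  morse_decomposition K MV m -> enumeration K sig -> enumeration K sig' ->
  admissible m sig -> admissible m sig' -> morse_fixed m sig sig' ->
  (forall a, sig' (pi a) = sig a) -> (forall a, sig (rho a) = sig' a) ->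
  (forall a, pi (rho a) = a) -> (forall a, rho (pi a) = a) ->
  forall j a, ConMatOut m sig' (bdmx sig') (pi a) (pi j) =
              ConMatOut m sig (bdmx sig) a j.
Proof.
move=> md en1 en2 ad1 ad2 mf hp hr hpr hrp.
have mf' := mf_sym mf.
set C := ConMatOut m sig (bdmx sig).
set C' := ConMatOut m sig' (bdmx sig').
have [g0 g1 g2 g4] := Good_out (bd_bound md en1).
have [g0' g1' g2' g4'] := Good_out (bd_bound md en2).
rewrite -/C in g0 g1 g2 g4; rewrite -/C' in g0' g1' g2' g4'.
have Abd : forall a b, bdmx sig' (pi a) (pi b) = bdmx sig a b.
  by move=> a b; rewrite /bdmx !mxE !hp.
have piinj : injective pi by apply: (can_inj hrp).
suff H : forall k (j : 'I_n), (j < k)%N -> forall a, C' (pi a) (pi j) = C a j.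
  by move=> j a; apply: (H j.+1).
elim=> [//|k IH] j jk.
have IHj : forall s : 'I_n, (s < j)%N -> forall a, C' (pi a) (pi s) = C a s.
  by move=> s sj; apply: IH; apply: leq_trans sj jk.
have IHr : forall s : 'I_n, (s < j)%N -> forall a, C (rho a) (rho (pi s)) = C' a (pi s).
  by move=> s sj a; rewrite hrp -{2}(hpr a) IHj.
have Hback : forall s : 'I_n, (s < j)%N -> homogeneous m sig' C' (pi s) ->
    homogeneous m sig C s.
  move=> s sj hh; rewrite -(hrp s).
  apply: (homog_transfer ad1 mf' hr hrp (IHr s sj) _ hh).
  by move=> a; apply: g4'.
have Hfwd : forall (s i : 'I_n), (s < j)%N -> homogeneous m sig C s ->
    low C s = Some i ->
    homogeneous m sig' C' (pi s) /\ low C' (pi s) = Some (pi i).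
  move=> s i sj hh hl; split.
    by apply: (homog_transfer ad2 mf hp hpr (IHj s sj) _ hh) => a; apply: g4.
  apply: (low_transfer ad2 mf hp hpr (IHj s sj) _ hl).
    by move=> a; apply: g4.
  by move: hh; rewrite /homogeneous hl => /eqP.
have [x hx ex] := g1 j (ltn_ord j).
have [x' hx' ex'] := g1' (pi j) (ltn_ord _).
have hy : forall s, x' (pi s) != 0 -> Hs m sig C j s.
  move=> s /hx' /and3P[lt hh le]; rewrite !hp in le.
  have sj : (s < j)%N by rewrite (mf_lt ad1 ad2 mf hp le).
  by rewrite /Hs sj le Hback.
have ew : forall a, C' (pi a) (pi j) = bdmx sig a j + \sum_s x' (pi s) * C a s.
  move=> a; rewrite ex' Abd; congr (_ + _).
  rewrite (reindex_inj piinj) /=; apply: eq_bigr => s _.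
  case E: (x' (pi s) == 0); first by rewrite (eqP E) !mul0r.
  have /and3P[sj _ _] := hy s (negbT E).
  by rewrite IHj.
have hz : forall s, x s - x' (pi s) = 0.
  apply: (@uniq_comb n C (Hs m sig C j)).
  - move=> s /and3P[_ hh _]; move: hh; rewrite /homogeneous.
    by case: (low C s) => [i _|//]; exists i.
  - move=> s t i /and3P[_ hs _] /and3P[_ ht _] ls lt.
    have [nzs _] := lowS ls; have [nzt _] := lowS lt.
    case: (ltngtP s t) => st.
    + by move: nzt; rewrite (g2 t s i (ltn_ord t) st hs ls) eqxx.
    + by move: nzs; rewrite (g2 s t i (ltn_ord s) st ht lt) eqxx.
    + exact: val_inj.
  - move=> s; case E1: (x s == 0); last by move=> _; apply: hx; rewrite E1.
    case E2: (x' (pi s) == 0); last by move=> _; apply: hy; rewrite E2.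
    by rewrite (eqP E1) (eqP E2) subr0 eqxx.
  - move=> s i hs ls.
    under eq_bigr do rewrite mulrBl.
    rewrite sumrB; apply/eqP; rewrite subr_eq0; apply/eqP.
    have /and3P[sj hh _] := hs.
    have e0 : C i j = 0 := g2 j s i (ltn_ord j) sj hh ls.
    have [hh' ls'] := Hfwd s i sj hh ls.
    have e0' : C' (pi i) (pi j) = 0.
      apply: (g2' (pi j) (pi s) (pi i) (ltn_ord _) _ hh' ls').
      by rewrite -(mf_lt ad1 ad2 mf hp (a:=s) (b:=j)) //; case/and3P: hs.
    apply: (addrI (bdmx sig i j)); rewrite -ex -ew.
    by rewrite e0 e0'.
move=> a; rewrite ew ex; congr (_ + _); apply: eq_bigr => s _.
by have /eqP := hz s; rewrite subr_eq0 => /eqP ->.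
Qed.
End Main.
Theorem theorem3 (V : finType) (K : {set {set V}}) (MV : {set {set {set V}}})
  (d : Order.disp_t) (P : finPOrderType d) (m : {set V} -> P) (n : nat)
  (sig sig' : 'I_n -> {set V}) :
  simplicial_complex K ->
  multivector_field K MV ->
  morse_decomposition K MV m ->
  enumeration K sig -> enumeration K sig' ->
  admissible m sig -> admissible m sig' ->
  morse_fixed m sig sig' ->
  forall (i j : 'I_#|ConMatJ m sig (bdmx sig)|) (i' j' : 'I_n),
    sig' i' = sig (enum_val i) -> sig' j' = sig (enum_val j) ->
    exists i2 j2 : 'I_#|ConMatJ m sig' (bdmx sig')|,
      [/\ enum_val i2 = i', enum_val j2 = j' &
          ConMatS m sig (bdmx sig) i j = ConMatS m sig' (bdmx sig') i2 j2].
Proof.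
move=> _ _ md en1 en2 ad1 ad2 mf i j i' j' ei ej.
have mf' := mf_sym mf.
have [inj1 e1] := en1; have [inj2 e2] := en2.
have ex1 : forall a : 'I_n, exists a', sig' a' = sig a.
  move=> a; have : sig a \in K by rewrite -e1; apply/imsetP; exists a.
  by rewrite -e2 => /imsetP [a' _ ->]; exists a'.
have ex2 : forall a : 'I_n, exists a', sig a' = sig' a.
  move=> a; have : sig' a \in K by rewrite -e2; apply/imsetP; exists a.
  by rewrite -e1 => /imsetP [a' _ ->]; exists a'.
pose pi a := odflt a [pick a' | sig' a' == sig a].
pose rho a := odflt a [pick a' | sig a' == sig' a].
have hp : forall a, sig' (pi a) = sig a.
  move=> a; rewrite /pi; case: pickP => [a' /eqP //|H].
  by have [a' ea] := ex1 a; move: (H a'); rewrite ea eqxx.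
have hr : forall a, sig (rho a) = sig' a.
  move=> a; rewrite /rho; case: pickP => [a' /eqP //|H].
  by have [a' ea] := ex2 a; move: (H a'); rewrite ea eqxx.
have hpr : forall a, pi (rho a) = a by move=> a; apply: inj2; rewrite hp hr.
have hrp : forall a, rho (pi a) = a by move=> a; apply: inj1; rewrite hr hp.
have hc := main_cmp md en1 en2 ad1 ad2 mf hp hr hpr hrp.
set C := ConMatOut m sig (bdmx sig) in hc *.
set C' := ConMatOut m sig' (bdmx sig') in hc *.
have hc' : forall b a, C (rho a) (rho b) = C' a b.
  by move=> b a; rewrite -{2}(hpr a) -{2}(hpr b) hc.
have [_ _ _ g4] := Good_out (bd_bound md en1).
have [_ _ _ g4'] := Good_out (bd_bound md en2).
rewrite -/C in g4; rewrite -/C' in g4'.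
have HJ : forall k, k \in ConMatJ m sig (bdmx sig) -> pi k \in ConMatJ m sig' (bdmx sig').
  move=> k; rewrite !inE -/C -/C' => /andP[nh nt]; apply/andP; split.
    apply/negP => hh; move/negP: nh; apply; rewrite -(hrp k).
    apply: (homog_transfer ad1 mf' hr hrp (hc' (pi k)) _ hh).
    by move=> a; apply: g4'.
  apply/negP => /existsP [j0 /andP[hh /eqP hl]]; move/negP: nt; apply.
  apply/existsP; exists (rho j0); apply/andP; split.
    by apply: (homog_transfer ad1 mf' hr hrp (hc' j0) _ hh) => a; apply: g4'.
  apply/eqP; rewrite -(hrp k).
  apply: (low_transfer ad1 mf' hr hrp (hc' j0) _ hl).
    by move=> a; apply: g4'.
  by move: hh; rewrite /homogeneous hl => /eqP.
have ei' : i' = pi (enum_val i) by apply: inj2; rewrite hp.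
have ej' : j' = pi (enum_val j) by apply: inj2; rewrite hp.
have Hi : i' \in ConMatJ m sig' (bdmx sig') by rewrite ei'; apply: HJ; apply: enum_valP.
have Hj : j' \in ConMatJ m sig' (bdmx sig') by rewrite ej'; apply: HJ; apply: enum_valP.
exists (enum_rank_in Hi i'), (enum_rank_in Hj j'); split.
- have h := enum_rankK_in Hi Hi. exact h.
- have h := enum_rankK_in Hj Hj. exact h.
have h1 := enum_rankK_in Hi Hi. have h2 := enum_rankK_in Hj Hj.
rewrite /ConMatS [LHS]mxE [RHS]mxE.
refine (etrans (esym (hc (enum_val j) (enum_val i))) _).
rewrite -ei' -ej'.
exact (f_equal2 C' (esym h1) (esym h2)).
Qed.
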